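(* Let $A\subset\mathcal R$ be a closed zone with $w(A)=w$. Then there exist a finite Puiseux series $p(y)=a_1y^{r_1}+\cdots+a_ny^{r_n}$ with $r_i$ positive rationals, $r_1<\cdots<r_n<\frac1w$, real numbers $c_1<c_2$, and two Puiseux series $$\alpha_1=p(y)+c_1y^{\frac1w}+\mathrm{h.o.t.}_{>\frac1w}\in A,\qquad \alpha_2=p(y)+c_2y^{\frac1w}+\mathrm{h.o.t.}_{>\frac1w}\in A.$$ Moreover, for every $c$ with $c_1<c<c_2$, every Puiseux series (arc in $\mathcal R$) of the form $\alpha=p(y)+cy^{\frac1w}+\mathrm{h.o.t.}_{>\frac1w}$ lies in $A$.
   Context: Let $\mathcal R$ be the set of germs at $0$ of analytic arcs $\{x=\alpha(y),\ y\ge 0\}$ in the closed upper half-plane of $\mathbb R^2$, where $\alpha$ is given by a convergent Puiseux series $\alpha(y)=\sum_i c_iy^{p_i}$ with positive rational exponents $p_1<p_2<\cdots$. The order $\mathcal O(\gamma)$ of a Puiseux series is the smallest exponent with nonzero coefficient ($\mathcal O(0)=+\infty$). Write $\alpha<\beta$ if $\alpha(y)<\beta(y)$ for all sufficiently small $y>0$. A subset $A\subset\mathcal R$ is a zone if $\alpha,\beta\in A$, $\alpha<\gamma<\beta$, $\gamma\in\mathcal R$ imply $\gamma\in A$. Distance $d(\alpha,\beta)=1/\mathcal O(\alpha-\beta)$ (with $1/\infty=0$); width $w(A)=\sup\{d(\alpha,\beta):\alpha,\beta\in A\}$. A zone is closed if there exist $\alpha,\beta\in A$ with $d(\alpha,\beta)=w(A)$,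 and open otherwise. $\mathrm{h.o.t.}_{>r}$ denotes a sum of nonzero terms of order strictly greater than $r$. *)

(* Defs.v *)
From HB Require Import structures.
From mathcomp Require Import all_boot all_order all_algebra.
From mathcomp Require Import all_classical all_reals all_analysis.
Set Implicit Arguments. Unset Strict Implicit. Unset Printing Implicit Defensive.
Import Order.TTheory GRing.Theory Num.Theory.
Import numFieldNormedType.Exports.
Local Open Scope classical_set_scope.
Local Open Scope ring_scope.

(* A Puiseux series sum_i c_i y^{p_i} is represented by its coefficient
   function  c : rat -> R  (c q = coefficient of y^q).  *)

Section PuiseuxArcs.
Variable R : realType.

Definition exps_in (c : rat -> R) (N : nat) : Prop :=
  (0 < N)%N /\
  forall q : rat, c q != 0 -> exists k : nat, (0 < k)%N /\ q = k%:Q / N%:Q.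

Definition pterm (c : rat -> R) (N k : nat) (y : R) : R :=
  c (k%:Q / N%:Q) * y `^ (ratr (k%:Q / N%:Q)).

(* c is a convergent Puiseux series with positive rational exponents:
   the element of the set \mathcal R (germs of analytic arcs x = alpha(y)) *)
Definition puiseux_arc (c : rat -> R) : Prop :=
  exists N : nat, exps_in c N /\
    exists t : R, 0 < t /\ cvg ([series `|pterm c N k t| ]_k @ \oo).

Definition arc_val (c : rat -> R) (y v : R) : Prop :=
  exists N : nat, exps_in c N /\ ([series pterm c N k y]_k @ \oo --> v).

Definition lt_arc (a b : rat -> R) : Prop :=
  exists2 eps : R, 0 < eps &
    forall y : R, 0 < y < eps ->
      exists u v : R, [/\ arc_val a y u, arc_val b y v & u < v].

Definition is_order (g : rat -> R) (r : rat) : Prop :=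
  g r != 0 /\ forall q : rat, g q != 0 -> r <= q.

(* d(alpha, beta) = 1 / O(alpha - beta), with 1/oo = 0 *)
Definition dist (a b : rat -> R) : R :=
  match pselect (exists r : rat, is_order (a \- b) r) with
  | left H => (ratr (projT1 (cid H)))^-1
  | right _ => 0
  end.

Definition zone (A : set (rat -> R)) : Prop :=
  A `<=` puiseux_arc /\
  forall a b g : rat -> R, A a -> A b -> puiseux_arc g ->
    lt_arc a g -> lt_arc g b -> A g.

Definition width (A : set (rat -> R)) : \bar R :=
  ereal_sup [set (dist ab.1 ab.2)%:E | ab in [set ab | A ab.1 /\ A ab.2]].

Definition closed_zone (A : set (rat -> R)) : Prop :=
  zone A /\ exists a b, [/\ A a, A b & (dist a b)%:E = width A].

End PuiseuxArcs.

(* Main.v *)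
Require Import Defs.
From HB Require Import structures.
From mathcomp Require Import all_boot all_order all_algebra.
From mathcomp Require Import all_classical all_reals all_analysis.
From mathcomp Require Import ring lra.
Import Order.TTheory GRing.Theory Num.Theory.
Import numFieldNormedType.Exports.
Local Open Scope classical_set_scope.
Local Open Scope ring_scope.


Lemma floorNK (e : rat) (N : nat) : 0 <= e -> (0 < N)%N ->
  exists K : nat, forall k : nat, (k <= K)%N = (k%:Q / N%:Q <= e).
Proof.
move=> e0 N0; exists (Num.truncn (e * N%:Q)) => k.
rewrite Num.Theory.truncn_ge_nat ?mulr_ge0 ?ler0n //.
by rewrite ler_pdivrMr ?ltr0n.
Qed.

Lemma expo_ge0 (R : realType) (k N : nat) : 0 <= (ratr (k%:Q / N%:Q) : R).
Proof. by rewrite ler0q divr_ge0 ?ler0n. Qed.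

Lemma pterm_norm_le (R : realType) (c : rat -> R) N k s t :
  0 <= s <= t -> `|pterm c N k s| <= `|pterm c N k t|.
Proof.
move=> /andP[s0 st]; rewrite /pterm !normrM ler_wpM2l //.
rewrite !norm_powR ?(le_trans s0 st) // !ger0_norm ?(le_trans s0 st) //.
by apply: ge0_ler_powR; rewrite ?expo_ge0 ?nnegrE ?(le_trans s0 st).
Qed.

Lemma abs_cvg_le (R : realType) (c : rat -> R) N s t : 0 <= s <= t ->
  cvg ([series `|pterm c N k t|]_k @ \oo) ->
  cvg ([series `|pterm c N k s|]_k @ \oo).
Proof.
move=> st; apply: series_le_cvg => n /=; rewrite ?normr_ge0 //.
exact: pterm_norm_le st.
Qed.

Lemma abs_cvg_cvg (R : realType) (c : rat -> R) N s :
  cvg ([series `|pterm c N k s|]_k @ \oo) ->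
  cvg ([series pterm c N k s]_k @ \oo).
Proof. exact: normed_cvg. Qed.

Lemma tail_bound (R : realType) (c : rat -> R) N t y K u :
  (0 < N)%N -> 0 < y <= t ->
  cvg ([series `|pterm c N k t|]_k @ \oo) ->
  [series pterm c N k y]_k @ \oo --> u ->
  `|u - \sum_(0 <= k < K.+1) pterm c N k y| <=
     lim ([series `|pterm c N k t|]_k @ \oo) *
     (y / t) `^ (ratr (K.+1%:Q / N%:Q)).
Proof.
move=> N0 /andP[y0 yt] ct cu.
have t0 : 0 < t by apply: lt_le_trans yt.
set L := lim _.
set z := y / t.
have z0 : 0 < z by rewrite divr_gt0.
have z1 : z <= 1 by rewrite ler_pdivrMr // mul1r.
have key : forall n, (K.+1 <= n)%N ->
  `|[series pterm c N k y]_k n - \sum_(0 <= k < K.+1) pterm c N k y| <=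
    L * z `^ (ratr (K.+1%:Q / N%:Q)).
  move=> n Kn.
  have -> : \sum_(0 <= k < K.+1) pterm c N k y = [series pterm c N k y]_k K.+1 by [].
  rewrite sub_series_geq //.
  apply: (le_trans (ler_norm_sum _ _ _)).
  apply: (@le_trans _ _ (\sum_(K.+1 <= k < n) z `^ (ratr (K.+1%:Q / N%:Q)) * `|pterm c N k t|)).
    apply: ler_sum_nat => k /andP[Kk _].
    rewrite /pterm !normrM.
    have -> : y = z * t by rewrite /z divfK // gt_eqF.
    rewrite (powRM _ (ltW z0) (ltW t0)) normrM.
    rewrite (ger0_norm (powR_ge0 _ _)) (ger0_norm (powR_ge0 _ _)).
    rewrite [X in X <= _]mulrCA.
    apply: ler_pM; rewrite ?normr_ge0 ?mulr_ge0 ?powR_ge0 //.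
    apply: ger_powR; first by rewrite z0 z1.
    rewrite ler_rat ler_pM2r ?invr_gt0 ?ltr0n // ler_nat //.
  rewrite -mulr_sumr mulrC ler_wpM2r ?powR_ge0 //.
  apply: (@le_trans _ _ ([series `|pterm c N k t|]_k n)).
    rewrite /series /= [X in _ <= X](big_cat_nat (n:=K.+1)) //= ?(ltnW Kn) //.
    by rewrite lerDr sumr_ge0.
  apply: nondecreasing_cvgn_le => //.
  by apply: nondecreasing_series => k _ /=; rewrite normr_ge0.
have cn : (fun n => `|[series pterm c N k y]_k n - \sum_(0 <= k < K.+1) pterm c N k y|)
   @ \oo --> `|u - \sum_(0 <= k < K.+1) pterm c N k y|.
  by apply: cvg_norm; apply: cvgB => //; exact: cvg_cst.
apply: (cvgr_to_le cn).
near=> n; apply: key; near: n.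
by exists K.+1 => //.
Unshelve. all: by end_near.
Qed.



Lemma sum_seq_eq (T : eqType) (R : ringType) (s1 s2 : seq T) (F : T -> R) :
  uniq s1 -> uniq s2 -> (forall q, F q != 0 -> (q \in s1) = (q \in s2)) ->
  \sum_(q <- s1) F q = \sum_(q <- s2) F q.
Proof.
move=> u1 u2 H.
have E : forall s, \sum_(q <- s) F q = \sum_(q <- [seq q <- s | F q != 0]) F q.
  move=> s; rewrite big_filter [RHS]big_mkcond; apply: eq_bigr => q _.
  by case: (F q =P 0) => [->|].
rewrite E [RHS]E; apply: perm_big; apply: uniq_perm; rewrite ?filter_uniq //.
move=> q; rewrite !mem_filter; case: (boolP (F q != 0)) => //= Fq.
exact: H.
Qed.

Lemma ratN_inj (N : nat) : (0 < N)%N -> injective (fun k : nat => k%:Q / N%:Q).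
Proof.
move=> N0 k k' /= /(congr1 (fun x => x * N%:Q)).
rewrite !divfK ?pnatr_eq0 -?lt0n // => /eqP; rewrite eqr_nat => /eqP //.
Qed.

Lemma head_eq (R : realType) (c : rat -> R) N K e y s :
  exps_in c N -> (forall k : nat, (k <= K)%N = (k%:Q / N%:Q <= e)) ->
  uniq s -> (forall q, q \in s -> q <= e) ->
  (forall q, c q != 0 -> q <= e -> q \in s) ->
  \sum_(0 <= k < K.+1) pterm c N k y = \sum_(q <- s) c q * y `^ ratr q.
Proof.
move=> [N0 hN] hK us hs1 hs2.
rewrite /index_iota subn0 /pterm.
rewrite -(big_map (fun k : nat => k%:Q / N%:Q) xpredT (fun q => c q * y `^ ratr q)).
apply: sum_seq_eq => //.
  by rewrite (map_inj_uniq (@ratN_inj N N0)) iota_uniq.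
move=> q Fq.
have cq : c q != 0 by apply: contraNneq Fq => ->; rewrite mul0r.
have [k [k0 qE]] := hN q cq.
rewrite {1}qE (mem_map (@ratN_inj N N0)) mem_iota add0n ltnS /= hK -qE.
case E: (_ \in s); first by rewrite hs1 // E.
by apply/negbTE/negP => h; move: E; rewrite hs2 //; exact: cq.
Qed.


Lemma exp_pos (R : realType) (c : rat -> R) N q : exps_in c N -> c q != 0 -> 0 < q.
Proof.
move=> [N0 hN] cq; have [k [k0 ->]] := hN q cq.
by rewrite divr_gt0 ?ltr0n.
Qed.

Lemma abs_lim_ge0 (R : realType) (c : rat -> R) N t :
  cvg ([series `|pterm c N k t|]_k @ \oo) ->
  0 <= lim ([series `|pterm c N k t|]_k @ \oo).
Proof.
move=> ct; apply: (le_trans _ (nondecreasing_cvgn_le _ ct 0%N)).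
  by rewrite /series /= big_geq.
by apply: nondecreasing_series => k _ /=; rewrite normr_ge0.
Qed.

Lemma mem_sf (N K : nat) (e : rat) (q : rat) :
  (forall k : nat, (k <= K)%N = (k%:Q / N%:Q <= e)) ->
  q \in [seq (k : nat)%:Q / N%:Q | k <- iota 0 K.+1] -> q <= e.
Proof.
move=> hK /mapP[k]; rewrite mem_iota add0n ltnS hK => ke ->; exact: ke.
Qed.


Lemma key (R : realType) (f g : rat -> R) (e : rat) :
  puiseux_arc f -> puiseux_arc g -> (forall q, q < e -> f q = g q) ->
  f e < g e -> lt_arc f g.
Proof.
move=> [Nf [hf [tf [tf0 ctf]]]] [Ng [hg [tg [tg0 ctg]]]] fg fge.
have [Nf0 hNf] := hf; have [Ng0 hNg] := hg.
have e0 : 0 < e.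
  case: (eqVneq (f e) 0) => fe0.
    by apply: (@exp_pos _ g Ng e hg); rewrite gt_eqF // -fe0.
  exact: (@exp_pos _ f Nf e hf).
have [Kf hKf] := floorNK e Nf (ltW e0) Nf0.
have [Kg hKg] := floorNK e Ng (ltW e0) Ng0.
set t := Num.min tf tg.
have t0 : 0 < t by rewrite lt_min tf0 tg0.
have tft : 0 <= t <= tf by rewrite (ltW t0) ge_min lexx.
have tgt : 0 <= t <= tg by rewrite (ltW t0) ge_min lexx orbT.
have ctf2 := abs_cvg_le _ _ _ _ _ tft ctf.
have ctg2 := abs_cvg_le _ _ _ _ _ tgt ctg.
set Lf := lim ([series `|pterm f Nf k t|]_k @ \oo).
set Lg := lim ([series `|pterm g Ng k t|]_k @ \oo).
have Lf0 : 0 <= Lf := abs_lim_ge0 _ _ _ _ ctf2.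
have Lg0 : 0 <= Lg := abs_lim_ge0 _ _ _ _ ctg2.
set ef : R := ratr (Kf.+1%:Q / Nf%:Q).
set eg : R := ratr (Kg.+1%:Q / Ng%:Q).
have efe : ratr e < ef by rewrite ltr_rat ltNge -hKf ltnn.
have ege : ratr e < eg by rewrite ltr_rat ltNge -hKg ltnn.
set dl := Num.min ef eg - ratr e.
have dl0 : 0 < dl by rewrite subr_gt0 lt_min efe ege.
set d := g e - f e.
have d0 : 0 < d by rewrite subr_gt0.
set D := d * t `^ ratr e.
have D0 : 0 < D by rewrite mulr_gt0 // powR_gt0.
set L := Lf + Lg + 1.
have L0 : 0 < L by rewrite /L ltr_wpDl // addr_ge0.
set r := (D / L) `^ (dl^-1).
have r0 : 0 < r by rewrite powR_gt0 // divr_gt0.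
have rdl : r `^ dl = D / L.
  by rewrite /r -powRrM mulVf ?gt_eqF // powRr1 // ltW // divr_gt0.
exists (t * Num.min 1 r); first by rewrite mulr_gt0 // lt_min ltr01 r0.
move=> y /andP[y0 yeps].
set z := y / t.
have z0 : 0 < z by rewrite divr_gt0.
have yz : y = z * t by rewrite /z divfK // gt_eqF.
have zm : z < Num.min 1 r by rewrite /z ltr_pdivrMr // mulrC.
move: zm; rewrite lt_min => /andP[z1 zr].
have yt : 0 < y <= t by rewrite y0 yz ger_pMl // ltW.
have yt' : 0 <= y <= t by case/andP: yt => /ltW -> ->.
have cyf := abs_cvg_cvg _ _ _ _ (abs_cvg_le _ _ _ _ _ yt' ctf2).
have cyg := abs_cvg_cvg _ _ _ _ (abs_cvg_le _ _ _ _ _ yt' ctg2).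
set u := lim ([series pterm f Nf k y]_k @ \oo).
set v := lim ([series pterm g Ng k y]_k @ \oo).
exists u, v; split.
- by exists Nf; split.
- by exists Ng; split.
have tbf := tail_bound _ _ _ _ _ Kf _ Nf0 yt ctf2 cyf.
have tbg := tail_bound _ _ _ _ _ Kg _ Ng0 yt ctg2 cyg.
set sf := [seq (k : nat)%:Q / Nf%:Q | k <- iota 0 Kf.+1].
set sg := [seq (k : nat)%:Q / Ng%:Q | k <- iota 0 Kg.+1].
set s := undup (sf ++ sg).
have hs1 : forall q, q \in s -> q <= e.
  move=> q; rewrite mem_undup mem_cat => /orP[] hq.
    exact: (mem_sf _ _ _ _ hKf hq).
  exact: (mem_sf _ _ _ _ hKg hq).
have hsf : forall q, f q != 0 -> q <= e -> q \in s.
  move=> q fq qe; have [k [k0 qE]] := hNf q fq.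
  rewrite mem_undup mem_cat; apply/orP; left; apply/mapP; exists k => //.
  by rewrite mem_iota add0n ltnS hKf -qE.
have hsg : forall q, g q != 0 -> q <= e -> q \in s.
  move=> q gq qe; have [k [k0 qE]] := hNg q gq.
  rewrite mem_undup mem_cat; apply/orP; right; apply/mapP; exists k => //.
  by rewrite mem_iota add0n ltnS hKg -qE.
have Hf := head_eq _ _ _ _ _ y _ hf hKf (undup_uniq _) hs1 hsf.
have Hg := head_eq _ _ _ _ _ y _ hg hKg (undup_uniq _) hs1 hsg.
have es : e \in s.
  case: (eqVneq (f e) 0) => fe0; last exact: hsf.
  by apply: hsg; rewrite // gt_eqF // -fe0.
have dH : \sum_(q <- s) g q * y `^ ratr q - \sum_(q <- s) f q * y `^ ratr q
     = d * y `^ ratr e.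
  rewrite -sumrB (bigD1_seq e) ?undup_uniq //= -mulrBl big1_seq ?addr0 //.
  move=> q /andP[qe qs]; rewrite -mulrBl.
  have qle : q < e by rewrite lt_neqAle qe hs1.
  by rewrite fg // subrr mul0r.
rewrite -/u -/v -/Lf -/Lg -/z -/ef -/eg Hf in tbf.
rewrite -/u -/v -/Lf -/Lg -/z -/ef -/eg Hg in tbg.
rewrite -/s in tbf tbg.
move: tbf tbg dH.
set Sf := \sum_(q <- s) f q * _.
set Sg := \sum_(q <- s) g q * _.
move=> tbf tbg dH.
have ye : y `^ ratr e = z `^ ratr e * t `^ ratr e by rewrite yz powRM // ltW.
set P := z `^ ratr e.
set Q := z `^ dl.
have P0 : 0 < P by rewrite powR_gt0.
have Q0 : 0 <= Q by rewrite powR_ge0.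
have zPQ : forall x, ratr e + dl <= x -> z `^ x <= P * Q.
  move=> x hx; rewrite /P /Q -powRD ?(gt_eqF z0) ?implybT //.
  by apply: ger_powR => //; rewrite z0 (ltW z1).
have zf : z `^ ef <= P * Q by apply: zPQ; rewrite /dl addrC subrK ge_min lexx.
have zg : z `^ eg <= P * Q by apply: zPQ; rewrite /dl addrC subrK ge_min lexx orbT.
have QL : Q < D / L.
  by rewrite -rdl /Q; apply: gt0_ltr_powR; rewrite ?nnegrE ?ltW.
have QL' : Q * L < D by rewrite -ltr_pdivlMr.
have B1 : Lf * z `^ ef <= Lf * (P * Q) by apply: ler_wpM2l.
have B2 : Lg * z `^ eg <= Lg * (P * Q) by apply: ler_wpM2l.
have B3 : Lf * (P * Q) + Lg * (P * Q) < D * P.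
  rewrite -mulrDl; apply: (@le_lt_trans _ _ (L * (P * Q))).
    by apply: ler_wpM2r; [rewrite mulr_ge0 // ltW | rewrite /L lerDl].
  rewrite mulrCA mulrC ltr_pM2r //.
  by rewrite mulrC.
have dH' : Sg - Sf = D * P.
  by rewrite dH ye /D [z `^ _ * _]mulrC mulrA.
move: tbf tbg; rewrite !ler_norml => /andP[t1 t2] /andP[t3 t4].
lra.
Qed.


Lemma main_aux (R : realType) (A : set (rat -> R)) (a b : rat -> R) (e : rat) :
  zone A -> A a -> A b -> (forall q, q < e -> a q = b q) -> a e < b e ->
  exists p : rat -> R,
    (exists s : seq rat, forall q, p q != 0 -> q \in s) /\
    (forall q, p q != 0 -> 0 < q < e) /\
  exists c1 c2 : R, c1 < c2 /\
  exists a1 a2 : rat -> R,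
    [/\ A a1, (forall q, q < e -> a1 q = p q) & a1 e = c1] /\
    [/\ A a2, (forall q, q < e -> a2 q = p q) & a2 e = c2] /\
    (forall c : R, c1 < c < c2 ->
       forall a : rat -> R, puiseux_arc a ->
         (forall q, q < e -> a q = p q) -> a e = c -> A a).
Proof.
move=> [Asub Az] Aa Ab ab abe.
have pa := Asub _ Aa; have pb := Asub _ Ab.
have [Na [ha _]] := pa; have [Nb [hb _]] := pb.
have [Na0 hNa] := ha.
have e0 : 0 < e.
  case: (eqVneq (a e) 0) => ae0.
    by apply: (@exp_pos _ b Nb e hb); rewrite gt_eqF // -ae0.
  exact: (@exp_pos _ a Na e ha).
have [Ka hKa] := floorNK e Na (ltW e0) Na0.
exists (fun q => if q < e then a q else 0); split.
  exists [seq (k : nat)%:Q / Na%:Q | k <- iota 0 Ka.+1] => q.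
  case: ifP => qe; last by rewrite eqxx.
  move=> aq; have [k [k0 qE]] := hNa q aq.
  apply/mapP; exists k => //.
  by rewrite mem_iota add0n ltnS hKa -qE ltW.
split.
  move=> q; case: ifP => qe; last by rewrite eqxx.
  move=> aq.
  by apply/andP; split => //; exact: (@exp_pos _ a Na q ha).
exists (a e), (b e); split => //.
exists a, b; split; first by split => // q ->.
split.
  split => //.
  by move=> q qe; rewrite qe /=; symmetry; apply: ab.
move=> c /andP[c1 c2] a' pa' ha' a'e.
apply: (Az a b a') => //.
  apply: (@key _ a a' e pa pa') => [q qe|]; first by rewrite ha' qe.
  by rewrite a'e.
apply: (@key _ a' b e pa' pb) => [q qe|].
  rewrite ha' qe /=. exact: (ab q qe).
  by [].
by move: c2; rewrite -a'e.
Qed.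


Theorem lemma5p2 (R : realType) (A : set (rat -> R)) (w : R) :
  closed_zone A -> width A = w%:E -> 0 < w ->
  exists e : rat, ratr e = w^-1 /\
  exists p : rat -> R,
    (exists s : seq rat, forall q, p q != 0 -> q \in s) /\
    (forall q, p q != 0 -> 0 < q < e) /\
  exists c1 c2 : R, c1 < c2 /\
  exists a1 a2 : rat -> R,
    [/\ A a1, (forall q, q < e -> a1 q = p q) & a1 e = c1] /\
    [/\ A a2, (forall q, q < e -> a2 q = p q) & a2 e = c2] /\
    (forall c : R, c1 < c < c2 ->
       forall a : rat -> R, puiseux_arc a ->
         (forall q, q < e -> a q = p q) -> a e = c -> A a).
Proof.
move=> [Az [a [b [Aa Ab dab]]]] wA w0.
have : (dist a b)%:E = w%:E by rewrite dab wA.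
case; rewrite /dist; case: pselect => [H|_]; last first.
  by move=> w0'; rewrite -w0' ltxx in w0.
have [hr1 hr2] := projT2 (cid H).
set r := projT1 (cid H) in hr1 hr2 *.
move=> dw; exists r; split; first by rewrite -dw invrK.
have ab : forall q, q < r -> a q = b q.
  move=> q qr; apply/eqP; rewrite -subr_eq0; apply/negPn/negP => hq.
  by have := hr2 q hq; rewrite leNgt qr.
case: (ltgtP (a r) (b r)) => h.
- exact: main_aux (Az) Aa Ab ab h.
- apply: main_aux (Az) Ab Aa _ h => q qr; symmetry; exact: ab.
- by move: hr1; rewrite /= h subrr eqxx.
Qed.
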